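(* Consider an execution of the MBBA protocol (described in the context) and let $h>\frac23$ be the fraction of honest players among the $n$ players. Suppose that at the start of an execution of STEP 3 no player has halted (i.e. agreement on a bit vector has not yet been reached), and let $l$ be the number of components $c\in\{1,\dots,m\}$ on which $c$-agreement does not hold. Then, at the end of this STEP 3, the honest players are in agreement with probability at least $h\left(\frac12\right)^l>\frac23\left(\frac12\right)^l$.
   Context: Network model: $n$ players; every pair is joined by a direct private channel; synchronous steps, instantaneous delivery. Fewer than $n/3$ players are malicious (arbitrary behaviour); honest players follow the protocol and send the same message to every player. For player $i$, step $s$, component $c$ and value $v$, $\#_i^s(v,c)$ is the number of distinct players from which $i$ received in step $s$ a valid vector message whose $c$-th component is $v$ (counting $i$'s own); conflicting messages from one sender in one step are both discarded, duplicates count once. $c$-agreement holds if there is a value $v$ such that the $c$-th component $b_{j,c}$ of every honest player $j$'s current vector equals $v$; agreement means $c$-agreement for every $c$. Protocol MBBA: $H$ is a hash function modeled as a random oracle (outputs ordered lexicographically); $\mathrm{SIG}_i(x)$ is $i$'s signature under a unique-signature scheme (any valid signature on $x$ for $i$'s key equals $\mathrm{SIG}_i(x)$ except with negligible probability) with publicly known keys; $r$ a common random string independent of the keys; counter $\gamma$ starts at 0. Player $i$ holds $\mathbf{b}_i\in\{0,1\}^m$ and $\mathbf{f}_i$, initially all zeros. EXIT CHECK: if $\mathbf{f}_i$ is all ones, $i$ sends $\mathbf{b}_i$ marked final (treated by receivers as $i$'s message in all later steps), outputs $\mathbf{b}_i$ and halts. STEP 1: $i$ sends $\mathbf{b}_i$;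 for each $c$ with $f_{i,c}=0$: if $\#_i^1(0,c)>\frac23 n$, set $b_{i,c}=0$, $f_{i,c}=1$, perform EXIT CHECK; else if $\#_i^1(1,c)>\frac23n$, set $b_{i,c}=1$; else $b_{i,c}=0$. STEP 2: $i$ sends $\mathbf{b}_i$; for each $c$ with $f_{i,c}=0$: if $\#_i^2(1,c)>\frac23 n$, set $b_{i,c}=1$, $f_{i,c}=1$, perform EXIT CHECK; else if $\#_i^2(0,c)>\frac23n$, set $b_{i,c}=0$; else $b_{i,c}=1$. STEP 3: $i$ sends $s_i=\mathrm{SIG}_i(r\|\gamma)$ and $\mathbf{b}_i$; for each $c$ with $f_{i,c}=0$: if $\#_i^3(0,c)>\frac23n$, $b_{i,c}=0$; else if $\#_i^3(1,c)>\frac23n$, $b_{i,c}=1$; else $b_{i,c}=k_c$, the $c$-th bit of $k=H(\min_{j\in P_i}H(s_j))$ where $P_i$ is the set of players who sent $i$ a valid STEP 3 message. Then $\gamma\leftarrow\gamma+1$ and return to STEP 1. *)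

(* Defs.v *)
From mathcomp Require Import all_boot all_order all_algebra.
Set Implicit Arguments. Unset Strict Implicit. Unset Printing Implicit Defensive.
Import Order.TTheory GRing.Theory Num.Theory.

(* Messages of one step: [adv j i] is the (valid) vector message the malicious
   player j delivers to player i, or [None] if j delivers no valid message
   (conflicting messages are discarded, hence also [None]). *)
Definition msgs (n m : nat) := 'I_n -> 'I_n -> option ('I_m -> bool).

Record state (n m : nat) := State {
  sb : 'I_n -> 'I_m -> bool;
  sf : 'I_n -> 'I_m -> bool;
  shalt : 'I_n -> bool }.

Section Protocol.
Variables (n m : nat) (hon : {set 'I_n}).

(* message delivered by j to i: honest players send their current vector
   (a halted honest player's final vector, which is its current vector) *)
Definition deliv (s : state n m) (adv : msgs n m) (j i : 'I_n) :=
  if j \in hon then Some (sb s j) else adv j i.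

Definition cnt (s : state n m) (adv : msgs n m) (i : 'I_n) (c : 'I_m) (v : bool) :=
  #|[set j : 'I_n | if deliv s adv j i is Some x then x c == v else false]|.

Definition over23 (k : nat) := 2 * n < 3 * k.

Definition active (s : state n m) (i : 'I_n) := (i \in hon) && ~~ shalt s i.

Definition step12 (z : bool) (s : state n m) (adv : msgs n m) : state n m :=
  let fixes i c := [&& active s i, ~~ sf s i c & over23 (cnt s adv i c z)] in
  let nb i c :=
    if active s i && ~~ sf s i c then
      (if over23 (cnt s adv i c z) then z
       else if over23 (cnt s adv i c (~~ z)) then ~~ z else z)
    else sb s i c in
  let nf i c := sf s i c || fixes i c in
  let nh i := shalt s i || ([exists c, fixes i c] && [forall c, nf i c]) in
  State nb nf nh.

Definition step1 := step12 false.
Definition step2 := step12 true.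

(* STEP 3.  [u j] is H(s_j) (hash outputs, lexicographically ordered, modelled
   by 'I_N), [G x] is H(x) restricted to its first m bits. *)
Definition step3 (N : nat) (s : state n m) (u : 'I_n -> 'I_N)
    (G : 'I_N -> 'I_m -> bool) (adv : msgs n m) : state n m :=
  let sig j i := if j \in hon then ~~ shalt s j else (if adv j i is Some _ then true else false) in
  let P i := [set j | sig j i] in
  let k i := G (u [arg min_(j < i in P i) u j]) in
  let nb i c :=
    if active s i && ~~ sf s i c then
      (if over23 (cnt s adv i c false) then false
       else if over23 (cnt s adv i c true) then true else k i c)
    else sb s i c in
  State nb (sf s) (shalt s).

Definition init (b0 : 'I_n -> 'I_m -> bool) : state n m :=
  State b0 (fun _ _ => false) (fun _ => false).

(* states reachable at the start of some STEP 3 of an execution, for arbitrary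
   inputs, arbitrary malicious behaviour and arbitrary past random-oracle values *)
Inductive reach3 (N : nat) : state n m -> Prop :=
| reach3_first b0 a1 a2 : reach3 N (step2 (step1 (init b0) a1) a2)
| reach3_next s u G a3 a1 a2 : reach3 N s ->
    reach3 N (step2 (step1 (@step3 N s u G a3) a1) a2).

Definition cagree (b : 'I_n -> 'I_m -> bool) (c : 'I_m) :=
  [exists v : bool, [forall j in hon, b j c == v]].
Definition agree (b : 'I_n -> 'I_m -> bool) := [forall c, cagree b c].

End Protocol.

(* probability space of the fresh random-oracle values used in the STEP 3 *)
Definition Omega (n m N : nat) :=
  ({ffun 'I_n -> 'I_N} * {ffun 'I_N -> {ffun 'I_m -> bool}})%type.

Definition prob (T : finType) (A : {set T}) : rat := #|A|%:R / #|T|%:R.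

(* Main.v *)
Require Import Defs.
From mathcomp Require Import all_boot all_order all_algebra zify.
Import Order.TTheory GRing.Theory Num.Theory.
Set Implicit Arguments. Unset Strict Implicit.

Section Proto.
Variables (n m : nat) (hon : {set 'I_n}).
Hypothesis Ht : 3 * #|~: hon| < n.

Lemma card_hon : #|hon| + #|~: hon| = n.
Proof. by rewrite cardsC card_ord. Qed.

Lemma cnt_le (s : state n m) adv i c v :
  cnt hon s adv i c v <= #|[set j in hon | sb s j c == v]| + #|~: hon|.
Proof.
rewrite /cnt; apply: leq_trans (leq_card_setU _ _); apply: subset_leq_card.
apply/subsetP => j; rewrite !inE /deliv; case: (j \in hon) => //= H.
by rewrite H.
Qed.

Lemma cnt_ge (s : state n m) adv i c v :
  #|[set j in hon | sb s j c == v]| <= cnt hon s adv i c v.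
Proof.
rewrite /cnt; apply: subset_leq_card.
apply/subsetP => j; rewrite !inE /deliv; by case/andP=> -> .
Qed.

Lemma hsplit (b : 'I_n -> 'I_m -> bool) c v :
  #|[set j in hon | b j c == v]| + #|[set j in hon | b j c == ~~ v]| = #|hon|.
Proof.
rewrite -(cardsID [set j | b j c == v] hon); congr (_ + _); apply: eq_card => j;
rewrite !inE; case: (j \in hon); rewrite ?andbF ?andbT //=; by case: v; case: (b j c).
Qed.

Lemma two_over (s : state n m) adv i i' c v :
  over23 n (cnt hon s adv i c v) -> over23 n (cnt hon s adv i' c (~~ v)) -> False.
Proof.
rewrite /over23 => H1 H2.
have := cnt_le s adv i c v; have := cnt_le s adv i' c (~~ v).
have := hsplit (sb s) c v; have := card_hon; lia.
Qed.

Lemma all_v (s : state n m) adv c v : (forall j, j \in hon -> sb s j c = v) -> forall i,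
  over23 n (cnt hon s adv i c v) && ~~ over23 n (cnt hon s adv i c (~~ v)).
Proof.
move=> Hall i.
have E1 : [set j in hon | sb s j c == v] = hon.
  by apply/setP => j; rewrite !inE; case hj: (j \in hon) => //=; rewrite Hall ?eqxx.
have E2 : #|[set j in hon | sb s j c == ~~ v]| = 0.
  apply/eqP; rewrite cards_eq0; apply/eqP/setP => j; rewrite !inE.
  case hj: (j \in hon) => //=; rewrite Hall //; by case: (v).
have := cnt_le s adv i c (~~ v); have := cnt_ge s adv i c v.
rewrite E1 E2 /over23; have := card_hon; lia.
Qed.

Definition Inv (s : state n m) := forall c,
  (forall j, j \in hon -> shalt s j -> sf s j c) /\
  (forall j i, j \in hon -> i \in hon -> sf s j c -> sb s i c = sb s j c).

Lemma nb12_agree z (s : state n m) adv c v x : (forall j, j \in hon -> sb s j c = v) ->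
  x \in hon -> sb (step12 hon z s adv) x c = v.
Proof.
move=> Hall hx /=. have /andP[H1 H2] := all_v adv Hall x.
case: ifP => _; last exact: Hall.
by case: z; case: v Hall H1 H2 => Hall H1 H2 /=; rewrite ?H1 ?(negbTE H2).
Qed.

Lemma nb3_agree N (s : state n m) u G adv c v x : (forall j, j \in hon -> sb s j c = v) ->
  x \in hon -> sb (@step3 n m hon N s u G adv) x c = v.
Proof.
move=> Hall hx /=. have /andP[H1 H2] := all_v adv Hall x.
case: ifP => _; last exact: Hall.
by case: v Hall H1 H2 => Hall H1 H2 /=; rewrite ?H1 ?(negbTE H2).
Qed.

Lemma inv_step12 z (s : state n m) adv : Inv s -> Inv (step12 hon z s adv).
Proof.
move=> I c; split.
  move=> j hj /= /orP[/(proj1 (I c) j hj) -> //|/andP[_ /forallP H]]; exact: H.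
move=> j i hj hi Hnf.
case: (boolP [exists x in hon, sf s x c]).
  case/exists_inP=> x hx Hx.
  have Hall : forall y, y \in hon -> sb s y c = sb s x c.
    by move=> y hy; apply: (proj2 (I c)).
  by rewrite !(nb12_agree z adv Hall).
move=> Hno.
have Hnf' : forall y, y \in hon -> sf s y c = false.
  by move=> y hy; apply: negbTE; apply: contra Hno => H; apply/exists_inP; exists y.
have Hact : forall y, y \in hon -> active hon s y.
  move=> y hy; rewrite /active hy /=; apply/negP => Hh.
  by move: (proj1 (I c) y hy Hh); rewrite Hnf'.
have Hov : over23 n (cnt hon s adv j c z) by move: Hnf; rewrite /= Hnf' //=; case/andP.
have Hz : forall y, y \in hon -> sb (step12 hon z s adv) y c = z.
  move=> y hy /=; rewrite Hact // Hnf' //=.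
  case: ifP => // _; case: ifP => // H; exfalso; exact: (two_over Hov H).
by rewrite !Hz.
Qed.

Lemma inv_step3 N (s : state n m) u G adv : Inv s -> Inv (@step3 n m hon N s u G adv).
Proof.
move=> I c; split; first exact: (proj1 (I c)).
move=> j i hj hi Hf.
have Hall : forall y, y \in hon -> sb s y c = sb s j c.
  by move=> y hy; apply: (proj2 (I c)).
by rewrite !(nb3_agree u G adv Hall).
Qed.

Lemma inv_reach N (s : state n m) : reach3 hon N s -> Inv s.
Proof.
have Hi : forall b0, Inv (init b0) by move=> b0 c; split.
elim=> [b0 a1 a2|s' u G a3 a1 a2 _ IH].
  by apply: inv_step12; apply: inv_step12.
by apply: inv_step12; apply: inv_step12; apply: inv_step3.
Qed.


Lemma ar1 (h t a0 a1 k : nat) : 3*t < n -> h + t = n -> a1 + a0 = h -> k <= a0 + t ->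
  2*n < 3*(a1+t) -> 2*n < 3*k -> False.
Proof. lia. Qed.

Definition target (s : state n m) (c : 'I_m) :=
  over23 n (#|[set j in hon | sb s j c == true]| + #|~: hon|).

Lemma agree_E N (s : state n m) (u : 'I_n -> 'I_N) G adv j0 :
  Inv s -> (forall j, j \in hon -> ~~ shalt s j) -> j0 \in hon ->
  (forall k, u j0 <= u k) ->
  (forall c, ~~ cagree hon (sb s) c -> G (u j0) c = target s c) ->
  agree hon (sb (step3 hon s u G adv)).
Proof.
move=> I Hnh hj0 Hmin HG; apply/forallP => c.
case: (boolP (cagree hon (sb s) c)).
  case/existsP => v /forall_inP Hv.
  have Hall : forall j, j \in hon -> sb s j c = v by move=> j /Hv /eqP.
  apply/existsP; exists v; apply/forall_inP => x hx.
  by rewrite (nb3_agree u G adv Hall).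
move=> Hnc; apply/existsP; exists (target s c); apply/forall_inP => x hx /=.
have act : active hon s x by rewrite /active hx Hnh.
have nf : ~~ sf s x c.
  apply: contra Hnc => Hf; apply/existsP; exists (sb s x c); apply/forall_inP => y hy.
  by rewrite (proj2 (I c) x y hx hy Hf).
rewrite act nf /=.
set P := [set j | _].
have xP : x \in P by rewrite inE hx Hnh.
have j0P : j0 \in P by rewrite inE hj0 Hnh.
case: arg_minnP => [|am amP Ham]; first by [].
have Eam : u am = u j0.
  by apply/val_inj/eqP; rewrite eqn_leq Hmin Ham.
rewrite Eam HG //.
case: ifP => H1.
  rewrite eq_sym eqbF_neg; apply/negP => Ht'.
  move: Ht' H1; rewrite /target /over23 => Ht' H1.
  have := cnt_le s adv x c false; have := card_hon; have := hsplit (sb s) c true.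
  move=> E Hh Hc; exact: (ar1 Ht Hh E Hc Ht' H1).
case: ifP => H2 //.
rewrite eq_sym eqb_id.
move: H2; rewrite /target /over23 => H2.
have := cnt_le s adv x c true; lia.
Qed.

End Proto.
Definition Aset n N (hon : {set 'I_n}) :=
  [set u : {ffun 'I_n -> 'I_N} | [exists j0 in hon, [forall k, u j0 <= u k]]].

Lemma rot_count n' N (hon : {set 'I_n'.+1}) :
  #|hon| * N ^ n'.+1 <= n'.+1 * #|Aset N hon|.
Proof.
set A := Aset N hon.
pose rot (r : 'I_n'.+1) (u : {ffun 'I_n'.+1 -> 'I_N}) : {ffun 'I_n'.+1 -> 'I_N} :=
  [ffun j : 'I_n'.+1 => u (j + r)%R].
have inj r : injective (rot r).
  move=> u1 u2 H; apply/ffunP => j; have := congr1 (fun f : {ffun 'I_n'.+1 -> 'I_N} => f (j - r)%R) H.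
  by rewrite /rot !ffunE subrK.
have c1 r : #|[set u | rot r u \in A]| = #|A| by rewrite -(card_preimset A (inj r)); apply: eq_card => u; rewrite !inE.
have -> : n'.+1 * #|A| = \sum_(r : 'I_n'.+1) \sum_(u | rot r u \in A) 1.
  rewrite -{1}(card_ord n'.+1) -sum_nat_const; apply: eq_bigr => r _.
  by rewrite sum1_card -(c1 r); apply: eq_card => u; rewrite inE.
rewrite (eq_bigr (fun r => \sum_u (if rot r u \in A then 1 else 0))); last first.
  by move=> r _; rewrite big_mkcond.
rewrite exchange_big /=.
have -> : #|hon| * N ^ n'.+1 = \sum_(u : {ffun 'I_n'.+1 -> 'I_N}) #|hon|.
  by rewrite sum_nat_const card_ffun !card_ord mulnC.
apply: leq_sum => u _.
have [p _ Hp] := @arg_minnP _ ord0 predT (fun j => nat_of_ord (u j)) isT.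
have injp : injective (fun j : 'I_n'.+1 => p - j)%R.
  by apply: (can_inj (g := fun j => p - j)%R) => j; rewrite opprB addrC subrK.
rewrite -(card_imset hon injp) -big_mkcond /= sum1_card.
apply: subset_leq_card; apply/subsetP => r /imsetP [j hj ->].
change (rot (p - j)%R u \in A); rewrite inE; apply/exists_inP; exists j => //.
apply/forallP => k; rewrite /rot !ffunE.
have -> : (j + (p - j))%R = p by rewrite addrC subrK.
by apply: Hp.
Qed.
Lemma prod_image (aT : finType) (f : aT -> nat) :
  foldr muln 1 [seq f y | y : aT] = \prod_y f y.
Proof.
rewrite /image_mem /= -big_enum.
have gen : forall s, foldr muln 1 (map f s) = \prod_(i <- s) f i.
  elim=> [|x e IH]; first by rewrite big_nil.
  by rewrite /= big_cons IH.
exact: gen.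
Qed.

Lemma card_at (aT Y : finType) (x : aT) (T : {set Y}) :
  #|[set G : {ffun aT -> Y} | G x \in T]| * #|Y| = #|T| * #|Y| ^ #|aT|.
Proof.
pose F := fun y : aT => if y == x then [pred z | z \in T] else predT.
have -> : #|[set G : {ffun aT -> Y} | G x \in T]| = #|family F|.
  apply: eq_card => G; rewrite inE; apply/idP/familyP.
    by move=> H y; rewrite /F; case: eqP => [->|]. 
  by move/(_ x); rewrite /F eqxx.
rewrite card_family prod_image (bigD1 x) //= {1}/F eqxx.
rewrite (eq_bigr (fun _ => #|Y|)); last by move=> y /negbTE; rewrite /F => ->; apply: eq_card.
rewrite -mulnA; congr (_ * _).
have hpos : 0 < #|aT| by apply/card_gt0P; exists x.
rewrite prod_nat_const cardC1 -expnSr prednK //.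
Qed.

Lemma card_T (aT : finType) (D : {set aT}) (tg : aT -> bool) :
  #|[set f : {ffun aT -> bool} | [forall c, (c \in D) ==> (f c == tg c)]]| * 2 ^ #|D|
  = 2 ^ #|aT|.
Proof.
pose F := fun c : aT => if c \in D then [pred z | z == tg c] else predT.
have -> : #|[set f : {ffun aT -> bool} | [forall c, (c \in D) ==> (f c == tg c)]]|
    = #|family F|.
  apply: eq_card => f; rewrite inE; apply/forallP/familyP => H c; move: (H c); rewrite /F.
    by case: (c \in D).
  by case: (c \in D).
rewrite card_family prod_image.
rewrite (eq_bigr (fun c => if c \in ~: D then 2 else 1)); last first.
  move=> c _; rewrite /F inE; case: (c \in D) => /=.
    by rewrite (@eq_card _ _ (pred1 (tg c))) ?card1.
  by rewrite (@eq_card _ _ (@predT bool)) // card_bool.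
rewrite -big_mkcond prod_nat_const -expnD addnC cardsC //.
Qed.

From mathcomp Require Import ring lra.
Local Open Scope ring_scope.

Theorem lemma3 (n m N : nat) (hon : {set 'I_n}) (s : state n m)
    (adv : Omega n m N -> msgs n m) :
  (0 < N)%N ->
  (3 * #|~: hon| < n)%N ->
  reach3 hon N s ->
  (forall j, j \in hon -> ~~ shalt s j) ->
  let l := #|[set c : 'I_m | ~~ cagree hon (sb s) c]| in
  let h : rat := #|hon|%:R / n%:R in
  h * (1/2) ^+ l <=
    prob [set w : Omega n m N |
           agree hon (sb (step3 hon s (fun j => w.1 j) (fun x c => w.2 x c) (adv w)))]
  /\ 2/3 * (1/2) ^+ l < h * (1/2) ^+ l.
Proof.
case: n hon s adv => [|n'] hon s adv HN Ht R Hnh.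
  by rewrite ltn0 in Ht.
move=> l h.
have I := inv_reach Ht R.
pose D := [set c : 'I_m | ~~ cagree hon (sb s) c].
have lD : l = #|D| by [].
clearbody l; subst l.
set T := [set f : {ffun 'I_m -> bool} | [forall c, (c \in D) ==> (f c == target hon s c)]].
set E := [set w : Omega n'.+1 m N | _].
set E' := [set w : Omega n'.+1 m N |
   [exists j0 in hon, [forall k, (w.1 j0 <= w.1 k)%N] && (w.2 (w.1 j0) \in T)]].
have sub : E' \subset E.
  apply/subsetP => w; rewrite !inE => /exists_inP [j0 hj0 /andP [/forallP Hmin HT]].
  apply: (agree_E Ht (adv w) I Hnh hj0 Hmin) => c Hc.
  move: HT; rewrite inE => /forallP /(_ c) /implyP; rewrite inE => /(_ Hc) /eqP.
  done.
set A := Aset N hon.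
pose C (x : 'I_N) := #|[set G : {ffun 'I_N -> {ffun 'I_m -> bool}} | G x \in T]|.
set Y := #|{ffun 'I_m -> bool}|.
have Ypos : (0 < Y)%N by rewrite /Y card_ffun card_bool expn_gt0.
have x0 : 'I_N := Ordinal HN.
have Cx y : C y = C x0.
  apply/eqP; rewrite -(eqn_pmul2r Ypos) /C !card_at //.
have cardE' : (#|A| * C x0 <= #|E'|)%N.
  have -> : #|E'| = (\sum_u #|[set G | (u, G) \in E']|)%N.
    rewrite -sum1_card (eq_bigr (fun u => \sum_(G in [set G | (u, G) \in E']) 1)%N);
      last by move=> u _; rewrite sum1_card.
    rewrite pair_big_dep /=; apply: eq_bigl => -[u G]; by rewrite /= !inE.
  rewrite -sum_nat_const big_mkcond /=; apply: leq_sum => u _.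
  case: ifP => // /[dup] hA; rewrite inE => /exists_inP [j0 hj0 /forallP Hmin].
  rewrite -(Cx (u j0)); apply: subset_leq_card; apply/subsetP => G; rewrite !inE => HG.
  apply/exists_inP; exists j0 => //=; rewrite inE HG andbT; exact/forallP.
have cE : (#|E'| <= #|E|)%N by apply: subset_leq_card.
have rc := rot_count N hon.
have cT := card_T D (target hon s).
have cC := card_at x0 T.
have cO : #|{: Omega n'.+1 m N}| = (N ^ n'.+1 * Y ^ N)%N.
  by rewrite card_prod /Y !card_ffun !card_ord.
have e1 : (C x0 * Y = #|T| * Y ^ N)%N by rewrite /C /Y cC card_ord.
have e2 : (#|T| * 2 ^ #|D| = Y)%N by rewrite /Y card_ffun card_bool cT.
have key1 : (2 ^ #|D| * C x0 = Y ^ N)%N.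
  apply/eqP; rewrite -(eqn_pmul2r Ypos) -mulnA e1 mulnA (mulnC (2 ^ #|D|)%N) e2.
  by rewrite mulnC.
have nat_ineq : (#|hon| * #|{: Omega n'.+1 m N}| <= n'.+1 * 2 ^ #|D| * #|E|)%N.
  rewrite cO mulnA.
  apply: (leq_trans (leq_mul rc (leqnn _))).
  have s2 : (n'.+1 * #|A| * Y ^ N = n'.+1 * 2 ^ #|D| * (#|A| * C x0))%N.
    rewrite -key1; ring.
  rewrite s2 leq_mul2l (leq_trans cardE' cE) orbT //.
split.
  have -> : h * (1/2) ^+ #|D| = #|hon|%:R / (n'.+1 * 2 ^ #|D|)%:R.
    by rewrite /h natrM natrX expr_div_n expr1n div1r invfM mulrA.
  rewrite /prob ler_pdivrMr ?ltr0n ?muln_gt0 ?expn_gt0 // mulrAC ler_pdivlMr; last first.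
    by rewrite cO ltr0n muln_gt0 !expn_gt0 HN Ypos.
  by rewrite -!natrM ler_nat [X in (_ <= X)%N]mulnC.
rewrite ltr_pM2r ?exprn_gt0 // /h ltr_pdivlMr ?ltr0n // mulrAC ltr_pdivrMr //.
rewrite -!natrM ltr_nat.
have := card_hon hon; move: Ht; lia.
Qed.
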